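(* Let $A\in\mathbb{R}^{m\times n}$, $b\in\mathbb{R}^m$, $\delta\ge0$ with $\{x:\|Ax-b\|\le\delta\}\neq\emptyset$. Run the exact penalty decomposition method described in the context with any $\epsilon>0$, $\sigma>1$, $\rho_0>0$. Then for each $k$ for which $v^k$ is generated, the subproblem $$\min_{x\in\mathbb{R}^n}\{\langle v^k,|x|\rangle:\ \|Ax-b\|\le\delta\}$$ has an optimal solution.
   Context: Exact penalty decomposition method: (S.0) Given a tolerance $\epsilon>0$ and a ratio $\sigma>1$, choose $\rho_0>0$, set $v^0=e$ (the all-ones vector in $\mathbb{R}^n$) and $k:=0$. (S.1) Choose $x^{k+1}\in\arg\min_{x\in\mathbb{R}^n}\{\langle v^k,|x|\rangle:\ \|Ax-b\|\le\delta\}$. (S.2) For each $i$, set $v^{k+1}_i=0$ if $|x^{k+1}_i|>1/\rho_k$ and $v^{k+1}_i=1$ otherwise. (S.3) If $\langle v^{k+1},|x^{k+1}|\rangle\le\epsilon$, stop; otherwise go to (S.4). (S.4) Set $\rho_{k+1}=\sigma\rho_k$, $k:=k+1$, and go to (S.1). Here $\|\cdot\|$ is the Euclidean norm and $|x|$ the componentwise absolute value. *)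

(* Defs.v *)
From mathcomp Require Import all_boot all_order all_algebra.
From mathcomp Require Import reals.
Set Implicit Arguments. Unset Strict Implicit. Unset Printing Implicit Defensive.
Import Order.TTheory GRing.Theory Num.Theory.
Local Open Scope ring_scope.

Section EPD.
Variable R : realType.

Definition enorm (m : nat) (y : 'cV[R]_m) : R := Num.sqrt (\sum_(i < m) (y i 0) ^+ 2).

Definition wl1 (n : nat) (v x : 'cV[R]_n) : R := \sum_(i < n) v i 0 * `|x i 0|.

Definition feasible (m n : nat) (A : 'M[R]_(m, n)) (b : 'cV[R]_m) (delta : R)
  (x : 'cV[R]_n) : Prop := enorm (A *m x - b) <= delta.

Definition is_subsol (m n : nat) (A : 'M[R]_(m, n)) (b : 'cV[R]_m) (delta : R)
  (v x : 'cV[R]_n) : Prop :=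
  feasible A b delta x /\ forall y, feasible A b delta y -> wl1 v x <= wl1 v y.

Definition thresh_update (n : nat) (rho : R) (x : 'cV[R]_n) : 'cV[R]_n :=
  \col_i (if 1 / rho < `|x i 0| then 0 else 1).

(* The sequences x, v, rho form a run of the exact penalty decomposition
   method in which v^0, ..., v^k have been generated: for every j < k,
   x^{j+1} solves subproblem (S.1) with v^j, v^{j+1} is given by (S.2), and
   if v^{j+1} is not the last generated iterate (j+1 < k) then the stopping
   test (S.3) failed and rho_{j+1} = sigma * rho_j (S.4). *)
Definition epd_run_upto (m n : nat) (A : 'M[R]_(m, n)) (b : 'cV[R]_m) (delta : R)
  (eps sigma rho0 : R) (x v : nat -> 'cV[R]_n) (rho : nat -> R) (k : nat) : Prop :=
  rho 0%N = rho0 /\ v 0%N = const_mx 1 /\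
  forall j : nat, (j < k)%N ->
    is_subsol A b delta (v j) (x j.+1) /\
    v j.+1 = thresh_update (rho j) (x j.+1) /\
    ((j.+1 < k)%N -> eps < wl1 (v j.+1) (x j.+1) /\ rho j.+1 = sigma * rho j).

End EPD.

(* Main.v *)
Require Import Defs.
From mathcomp Require Import all_boot all_order all_algebra.
From mathcomp Require Import reals.
From mathcomp Require Import all_classical all_reals all_analysis.
Import Order.TTheory GRing.Theory Num.Theory.
Import numFieldNormedType.Exports.
Local Open Scope ring_scope.
Local Open Scope classical_set_scope.

Section Helpers.
Variable R : realType.

Lemma cont_sum p (I : Type) (r : seq I) (F : I -> 'rV[R]_p -> R) :
  (forall i, continuous (F i)) -> continuous (fun y => \sum_(i <- r) F i y).
Proof.
move=> HF; elim: r => [|a r IH].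
  have -> : (fun y : 'rV[R]_p => \sum_(i <- [::]) F i y) = fun=> 0.
    by apply: funext => y; rewrite big_nil.
  exact: cst_continuous.
have -> : (fun y : 'rV[R]_p => \sum_(i <- a :: r) F i y) =
   (F a) + (fun y => \sum_(i <- r) F i y).
  by apply: funext => y; rewrite big_cons.
by move=> y; apply: continuousD; [apply: HF | apply: IH].
Qed.

Lemma coordc p (j : 'I_p) : continuous (fun y : 'rV[R]_p => y 0 j).
Proof. exact: coord_continuous. Qed.

Lemma coord_le_sqrt p (f : 'I_p -> R) i :
  `|f i| <= Num.sqrt (\sum_(j < p) f j ^+ 2).
Proof.
rewrite -sqrtr_sqr; apply: ler_wsqrtr.
rewrite (bigD1 i) //= lerDl; apply: sumr_ge0 => j _; exact: sqr_ge0.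
Qed.

Lemma term_le_sum p (f : 'I_p -> R) i :
  (forall j, 0 <= f j) -> f i <= \sum_(j < p) f j.
Proof. by move=> h; rewrite (bigD1 i) //= lerDl; apply: sumr_ge0. Qed.

End Helpers.

Theorem lemma3p3 (R : realType) (m n : nat) (A : 'M[R]_(m, n)) (b : 'cV[R]_m)
  (delta : R) (hdelta : 0 <= delta)
  (hfeas : exists x0 : 'cV[R]_n, feasible A b delta x0)
  (eps sigma rho0 : R) (heps : 0 < eps) (hsigma : 1 < sigma) (hrho0 : 0 < rho0)
  (x v : nat -> 'cV[R]_n) (rho : nat -> R) (k : nat) :
  epd_run_upto A b delta eps sigma rho0 x v rho k ->
  exists xs : 'cV[R]_n, is_subsol A b delta (v k) xs.
Proof.
move=> H.
have w0 : forall i, 0 <= v k i 0.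
  case: k H => [|k] [_ [hv H]] i.
    by rewrite hv mxE ler01.
  have [_ [-> _]] := H k (ltnSn k).
  by rewrite mxE; case: ifP => _; rewrite ?lexx ?ler01.
set w := v k.
set M := row_mx A^T (diag_mx w^T) : 'M[R]_(n, m + n).
pose Phi (z : 'cV[R]_n) := z^T *m M.
pose g1 (y : 'rV[R]_(m + n)) :=
  Num.sqrt (\sum_(i < m) (y 0 (lshift n i) - b i 0) ^+ 2).
pose g2 (y : 'rV[R]_(m + n)) := \sum_(i < n) `|y 0 (rshift m i)|.
have hg1 : forall z, g1 (Phi z) = enorm (A *m z - b).
  move=> z; rewrite /g1 /enorm; congr Num.sqrt; apply: eq_bigr => i _.
  by rewrite /Phi /M mul_mx_row row_mxEl -trmx_mul !mxE.
have hg2 : forall z, g2 (Phi z) = wl1 w z.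
  move=> z; rewrite /g2 /wl1; apply: eq_bigr => i _.
  rewrite /Phi /M mul_mx_row row_mxEr mul_mx_diag !mxE.
  by rewrite normrM (ger0_norm (w0 i)) mulrC.
have hsurj : forall y : 'rV[R]_(m + n), y *m cokermx M = 0 ->
    Phi ((y *m pinvmx M)^T) = y.
  move=> y /eqP; rewrite -submxE => hy.
  by rewrite /Phi trmxK mulmxKpV.
have hsub : forall z, Phi z *m cokermx M = 0.
  by move=> z; apply/eqP; rewrite -submxE /Phi submxMl.
have [x0 hx0] := hfeas.
pose c := g2 (Phi x0).
pose K := [set y : 'rV[R]_(m + n) | y *m cokermx M = 0 /\ g1 y <= delta /\ g2 y <= c].
have g2c : continuous g2.
  apply: cont_sum => i; move=> y.
  apply: (continuous_comp (f := fun y : 'rV[R]_(m + n) => y 0 (rshift m i))).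
    exact: coordc.
  exact: norm_continuous.
have g1c : continuous g1.
  move=> y; apply: (continuous_comp (g := @Num.sqrt R)); last exact: sqrt_continuous.
  apply: cont_sum => i {}y.
  have -> : (fun y : 'rV[R]_(m + n) => (y 0 (lshift n i) - b i 0) ^+ 2) =
     (fun z => (z 0 (lshift n i) - b i 0) * (z 0 (lshift n i) - b i 0)).
    by apply: funext => z; rewrite /= expr2.
  apply: (continuousM (s:=fun z : 'rV[R]_(m + n) => z 0 (lshift n i) - b i 0)
     (t:=fun z : 'rV[R]_(m + n) => z 0 (lshift n i) - b i 0)); (apply: continuousB; [exact: coordc | exact: cst_continuous]).
have Kc : closed K.
  have -> : K = (\bigcap_(j in [set: 'I_(m + n)])
       ((fun y : 'rV[R]_(m + n) => \sum_i y 0 i * cokermx M i j) @^-1` [set x | x = 0]))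
     `&` (g1 @^-1` [set r | r <= delta] `&` g2 @^-1` [set r | r <= c]).
    apply/seteqP; split => y /=.
      case=> h1 [h2 h3]; split => //.
      by move=> j _ /=; move/matrixP: h1 => /(_ 0 j); rewrite !mxE.
    case=> h1 [h2 h3]; split=> //.
    apply/matrixP => i j; rewrite ord1 !mxE; exact: h1.
  apply: closedI; [apply: closed_bigI => j _ | apply: closedI].
  - apply: (proj1 (continuous_closedP _)); last exact: closed_eq.
    apply: cont_sum => i y.
    apply: (continuousM (s:=fun z : 'rV[R]_(m + n) => z 0 i) (t:=fun=> cokermx M i j)).
      exact: coordc.
    exact: cst_continuous.
  - by apply: (proj1 (continuous_closedP _) g1c); exact: closed_le.
  - by apply: (proj1 (continuous_closedP _) g2c); exact: closed_le.
have Kb : bounded_set K.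
  pose B := delta + \sum_(i < m) `|b i 0| + c.
  have c0 : 0 <= c by apply: sumr_ge0.
  have bi : forall i, `|b i 0| <= \sum_(i < m) `|b i 0|.
    by move=> i; apply: term_le_sum.
  have sb0 : 0 <= \sum_(i < m) `|b i 0| by apply: sumr_ge0.
  have HB : forall y, K y -> forall j, `|y 0 j| <= B.
    move=> y [_ [h1 h2]] j; rewrite -(fintype.splitK j); case: (fintype.split j) => j' /=.
      have e1 : `|y 0 (lshift n j') - b j' 0| <= delta.
        apply: le_trans h1.
        rewrite /g1 -sqrtr_sqr; apply: ler_wsqrtr; rewrite (bigD1 j') //= lerDl; apply: sumr_ge0 => i _; exact: sqr_ge0.
      have := ler_normD (y 0 (lshift n j') - b j' 0) (b j' 0).
      rewrite subrK => h; apply: (le_trans h); rewrite /B.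
      rewrite -addrA lerD //; apply: le_trans (bi j') _; by rewrite lerDl.
    have e2 : `|y 0 (rshift m j')| <= c.
      apply: le_trans h2; rewrite /g2; rewrite (bigD1 j') //= lerDl; exact: sumr_ge0.
    by rewrite /B ler_wpDl // addr_ge0.
  rewrite /bounded_set /= /bounded_near.
  near=> M0 => y Ky /=.
  have -> : `|y| = mx_norm y by []. rewrite mx_normrE.
  have BM : B < M0 by near: M0; apply: nbhs_pinfty_gt; exact: num_real.
  have B0 : 0 <= B by rewrite /B !addr_ge0.
  apply: (big_ind (fun r => r <= M0)).
  - exact: le_trans B0 (ltW BM).
  - by move=> r1 r2 h1 h2; rewrite ge_max h1 h2.
  - move=> [i j] _ /=; rewrite (ord1 i); apply: (le_trans (HB y Ky j)).
    exact: ltW.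
have Kcomp : compact K := bounded_closed_compact Kb Kc.
have K0 : K !=set0.
  exists (Phi x0); split; first exact: hsub.
  by split; [rewrite hg1; exact: hx0 | exact: lexx].
have [c1 hc1 hmin] := EVT_min_rV K0 Kcomp (continuous_subspaceT (A:=K) (f:=g2) g2c).
move: hc1; rewrite inE => -[hc1a [hc1b hc1c]].
have hP := hsurj c1 hc1a.
exists ((c1 *m pinvmx M)^T); split.
  by rewrite /feasible -hg1 hP.
move=> y hy; rewrite -!hg2 hP.
case: (leP (g2 (Phi y)) c) => h.
  apply: hmin; rewrite inE; split; first exact: hsub.
  by split; [rewrite hg1; exact: hy | exact: h].
exact: le_trans hc1c (ltW h).
Unshelve. all: by end_near.
Qed.
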